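(* Every sawed tree $F$ admits a plane drawing $d=(d_1,d_2)$ with $d_2(x)=\mathrm{height}(x)$ for every $x\in F$.
   Context: A finite tree is a finite rooted poset in which each $\downarrow x$ is a chain; $\mathrm{Top}(T)$ is its set of maximal elements and $\mathrm{height}(x)$ is the maximum of $|C|-1$ over chains $C\subseteq\downarrow x$. Let $T$ be a finite tree of height $>0$ all of whose top elements have the same height, with a plane ordering $\prec$ of $\mathrm{Top}(T)$ (a linear order such that each $\uparrow x\cap\mathrm{Top}(T)$ is a $\prec$-interval); enumerate $\mathrm{Top}(T)=\{t_1\prec\cdots\prec t_k\}$. The sawed tree based on $(T,\prec)$ is the poset obtained from $T$ by adding new elements $s_1,\dots,s_{k-1}$ with $t_i<s_i$ and $t_{i+1}<s_i$ for each $i$ (and the relations forced by transitivity). A plane drawing of a poset $G$ is an injection $d=(d_1,d_2)\colon G\to\mathbb R^2$ such that, drawing a straight edge from $d(x)$ to $d(y)$ whenever $y$ is an immediate successor of $x$, $x<y$ implies $d_2(x)<d_2(y)$ and distinct edges meet only at common endpoints. *)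

(* Defs.v *)
From mathcomp Require Import all_boot all_order all_algebra.
From mathcomp Require Import reals.
Set Implicit Arguments. Unset Strict Implicit. Unset Printing Implicit Defensive.
Import Order.TTheory GRing.Theory Num.Theory.

Section Posets.
Variables (V : finType) (le : rel V).

Definition is_poset : Prop :=
  [/\ reflexive le, antisymmetric le & transitive le].

Definition lt_of (x y : V) : bool := (x != y) && le x y.

Definition covers (x y : V) : bool :=
  lt_of x y && [forall z, ~~ (lt_of x z && lt_of z y)].

Definition is_chain (C : {set V}) : bool :=
  [forall x in C, forall y in C, le x y || le y x].

Definition downset (x : V) : {set V} := [set y | le y x].

Definition height (x : V) : nat :=
  \max_(C : {set V} | is_chain C && (C \subset downset x)) #|C|.-1.

Definition is_top (t : V) : bool := [forall y, le t y ==> (y == t)].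

Definition finite_tree : Prop :=
  [/\ is_poset, (exists r, forall x, le r x) & forall x, is_chain (downset x)].

(* plane ordering of Top(T), given as the enumeration t_1 < ... < t_k *)
Definition plane_order (tops : seq V) : Prop :=
  [/\ uniq tops,
      (forall t, (t \in tops) = is_top t) &
      (forall x (i j k : nat), i <= j -> j <= k -> k < size tops ->
         le x (nth x tops i) -> le x (nth x tops k) -> le x (nth x tops j))].

End Posets.

(* The sawed tree based on (T, tops): carrier T + {s_0, ..., s_(k-2)} where
   s_i sits above t_i and t_(i+1) (0-indexed); this is the order generated
   (transitively closed) by T's order and t_i < s_i, t_(i+1) < s_i. *)
Definition sawed_le (T : finType) (le : rel T) (tops : seq T) :
    rel (T + 'I_(size tops).-1)%type :=
  fun u v =>
    match u, v with
    | inl x, inl y => le x y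
    | inl x, inr i => le x (nth x tops i) || le x (nth x tops i.+1)
    | inr i, inr j => i == j
    | inr _, inl _ => false
    end.

Section Drawing.
Variable R : realType.
Local Open Scope ring_scope.

Definition on_segment (p q P : R * R) : Prop :=
  exists t : R, 0 <= t /\ t <= 1 /\
    P = ((1 - t) * p.1 + t * q.1, (1 - t) * p.2 + t * q.2).

Definition plane_drawing (V : finType) (le : rel V) (d : V -> R * R) : Prop :=
  [/\ injective d,
      (forall x y, lt_of le x y -> (d x).2 < (d y).2) &
      (forall x1 y1 x2 y2, covers le x1 y1 -> covers le x2 y2 ->
         (x1, y1) <> (x2, y2) ->
         forall P, on_segment (d x1) (d y1) P -> on_segment (d x2) (d y2) P ->
           exists v, [&& (v == x1) || (v == y1) & (v == x2) || (v == y2)]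
                     /\ P = d v)].
End Drawing.
Arguments sawed_le [T] le tops _ _.

(* Main.v *)
Require Import Defs.
From mathcomp Require Import all_boot all_order all_algebra.
From mathcomp Require Import reals.
From mathcomp Require Import ring lra zify.
Import Order.TTheory GRing.Theory Num.Theory.
Set Implicit Arguments. Unset Strict Implicit.

Section Gen.
Variables (V : finType) (le : rel V).

Lemma height_ub x n :
  (forall C, is_chain le C -> C \subset downset le x -> #|C|.-1 <= n) -> height le x <= n.
Proof. by move=> H; apply/bigmax_leqP => C /andP[c s]; apply: H. Qed.

Lemma height_lb x C : is_chain le C -> C \subset downset le x -> #|C|.-1 <= height le x.
Proof.
move=> c s; rewrite /height.
by apply: (@leq_bigmax_cond _ (fun C : {set V} => is_chain le C && (C \subset downset le x)) (fun C => #|C|.-1) C); rewrite c s.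
Qed.

Lemma height_chain x : is_chain le (downset le x) -> height le x = #|downset le x|.-1.
Proof.
move=> c; apply/eqP; rewrite eqn_leq height_lb // andbT.
by apply: height_ub => C _ s; rewrite -!subn1 leq_sub2r // subset_leq_card.
Qed.
End Gen.

Section Tree.
Variables (T : finType) (le : rel T).
Hypotheses (refl : reflexive le) (asym : antisymmetric le) (tr : transitive le)
  (chD : forall x, is_chain le (downset le x)).

Lemma chainP (C : {set T}) a b : is_chain le C -> a \in C -> b \in C -> le a b || le b a.
Proof. by move=> /forallP /(_ a) /implyP H aC bC; move/H: aC => /forallP /(_ b) /implyP; apply. Qed.

Lemma comp_below {x a b} : le a x -> le b x -> le a b || le b a.
Proof. by move=> ha hb; apply: (@chainP _ a b (chD x)); rewrite inE. Qed.

Lemma hT x : height le x = #|downset le x|.-1.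
Proof. exact: height_chain. Qed.

Lemma card_pos x : 0 < #|downset le x|.
Proof. by apply/card_gt0P; exists x; rewrite inE refl. Qed.

Lemma down_sub {x y} : le x y -> downset le x \subset downset le y.
Proof. by move=> h; apply/subsetP => z; rewrite !inE => /tr; apply. Qed.

Lemma lt_card {x y} : le x y -> x != y -> #|downset le x| < #|downset le y|.
Proof.
move=> h ne; apply: proper_card; rewrite properE down_sub //=.
apply/subsetPn; exists y; rewrite !inE ?refl //.
by apply/negP => h'; move/negP: ne; apply; apply/eqP; apply: asym; rewrite h h'.
Qed.

Lemma lt_height {x y} : le x y -> x != y -> height le x < height le y.
Proof.
move=> h ne; rewrite !hT; have := lt_card h ne; have := card_pos x.
by case: #|_| => // n _; case: #|_|.
Qed.

Lemma same_height x y t : le x t -> le y t -> height le x = height le y -> x = y.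
Proof.
move=> hx hy e; have /orP[h|h] := comp_below hx hy.
  by apply/eqP/negPn/negP => ne; have := lt_height h ne; rewrite e ltnn.
apply/eqP/negPn/negP => ne; have := lt_height h; rewrite eq_sym => /(_ ne).
by rewrite e ltnn.
Qed.

Lemma cov_height {x y} : covers le x y -> height le y = (height le x).+1.
Proof.
case/andP => /andP[ne lxy] /forallP nz; rewrite !hT.
have -> : downset le y = y |: downset le x.
  apply/setP => z; rewrite !inE; apply/idP/idP.
    move=> lzy; have /orP[lzx|lxz] := comp_below lzy lxy; first by rewrite lzx orbT.
    case: (eqVneq z y) => //= nzy; case: (eqVneq x z) => [<-|nxz]; first by rewrite refl.
    by have := nz z; rewrite /lt_of nxz lxz /= nzy lzy.
  by case/orP => [/eqP ->|/tr]; [rewrite refl | apply].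
rewrite cardsU1 inE; have := card_pos x.
suff -> : ~~ le y x by case: #|_|.
by apply/negP => lyx; move/negP: ne; apply; apply/eqP; apply: asym; rewrite lxy lyx.
Qed.

Lemma top_above x : exists t, is_top le t && le x t.
Proof.
case: (@arg_maxnP T x (le x) (fun y => #|downset le y|) (refl x)) => t lxt tmax.
exists t; rewrite lxt andbT; apply/forallP => y; apply/implyP => lty.
apply/negPn/negP => ne.
by have := tmax y (tr lxt lty); rewrite /geq /= leqNgt lt_card // eq_sym ne.

Qed.

End Tree.

Section Sawed.
Variables (T : finType) (le : rel T) (tops : seq T) (h : nat) (x0 : T).
Hypotheses (refl : reflexive le) (asym : antisymmetric le) (tr : transitive le)
  (chD : forall x, is_chain le (downset le x))
  (htop : forall t, is_top le t -> height le t = h)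
  (po : plane_order le tops).

Local Notation S := (sawed_le le tops).
Local Notation tp i := (nth x0 tops i).

Lemma nthd a b i : i < size tops -> nth a tops i = nth b tops i.
Proof. exact: set_nth_default. Qed.

Lemma tp_top i : i < size tops -> is_top le (tp i).
Proof. by case: po => _ tP _ hi; rewrite -tP mem_nth. Qed.

Lemma tp_height i : i < size tops -> height le (tp i) = h.
Proof. by move=> hi; apply: htop; apply: tp_top. Qed.

Lemma height_leh x : height le x <= h.
Proof.
have [t /andP[tt lxt]] := top_above refl asym tr x.
rewrite -(htop tt) !(hT chD) -!subn1 leq_sub2r // subset_leq_card //.
exact: down_sub.
Qed.

Lemma has_top x : has (le x) tops.
Proof.
have [t /andP[tt lxt]] := top_above refl asym tr x.
by apply/hasP; exists t => //; case: po => _ -> _.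
Qed.

Definition ix x := find (le x) tops.

Lemma ix_lt x : ix x < size tops.
Proof. by rewrite /ix -has_find has_top. Qed.

Lemma ix_le x : le x (tp (ix x)).
Proof. exact: nth_find (has_top x). Qed.

Lemma ix_tp j : j < size tops -> ix (tp j) = j.
Proof.
move=> hj; have := ix_le (tp j); have := tp_top hj.
move=> /forallP /(_ (tp (ix (tp j)))) /implyP H /H /eqP e.
case: po => u _ _.
by apply/eqP; rewrite -(nth_uniq x0 (ix_lt _) hj u) e.
Qed.

Lemma leqP1 m n : m <= n -> m.-1 <= n.-1.
Proof. by case: m => [|m] //=; case: n. Qed.

Local Notation U := (T + 'I_(size tops).-1)%type.

Lemma inl_inj : injective (@inl T 'I_(size tops).-1).
Proof. by move=> a b []. Qed.

Lemma HS_inl x : height S (inl x) = height le x.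
Proof.
apply/eqP; rewrite eqn_leq; apply/andP; split.
  apply: height_ub => C _ sub; rewrite (hT chD); apply: leqP1.
  apply: (leq_trans _ (leq_imset_card (@inl T 'I_(size tops).-1) (downset le x))).
  apply: subset_leq_card; apply/subsetP => u uC; have := subsetP sub u uC.
  rewrite inE; case: u uC => [a|i] //= _ lax.
  by apply/imsetP; exists a; rewrite ?inE.
rewrite (hT chD) -(card_imset _ inl_inj); apply: height_lb.
  apply/forallP => u; apply/implyP => /imsetP [a]; rewrite inE => lax ->.
  apply/forallP => v; apply/implyP => /imsetP [b]; rewrite inE => lbx ->.
  have := @comp_below _ _ chD x a b lax lbx. exact.
by apply/subsetP => u /imsetP [a]; rewrite !inE => lax ->.
Qed.

Lemma card_lift (i : 'I_(size tops).-1) (A : {set T}) :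
  #|inr i |: [set (@inl T 'I_(size tops).-1) a | a in A]| <= #|A|.+1.
Proof. rewrite cardsU1 -add1n; apply: leq_add; [by case: (_ \notin _) | exact: leq_imset_card]. Qed.

Lemma S_inr_inl (i : 'I_(size tops).-1) b :
  S (inl b) (inr i) = le b (tp i) || le b (tp i.+1).
Proof.
have hi : i < size tops by have := ltn_ord i; lia.
have hi1 : i.+1 < size tops by have := ltn_ord i; lia.
by rewrite /= (nthd b x0 hi) (nthd b x0 hi1).
Qed.

Lemma HS_inr (i : 'I_(size tops).-1) : height S (inr i) = h.+1.
Proof.
have hi : i < size tops by have := ltn_ord i; lia.
have hi1 : i.+1 < size tops by have := ltn_ord i; lia.
apply/eqP; rewrite eqn_leq; apply/andP; split.
  apply: height_ub => C ch sub.
  have inC : forall u, u \in C -> S u (inr i) by move=> u /(subsetP sub); rewrite inE.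
  suff [t [tt sC]] : exists t, (t = tp i \/ t = tp i.+1) /\
        C \subset inr i |: [set (@inl T 'I_(size tops).-1) a | a in downset le t].
    have eh : #|downset le t| = h.+1.
      have : height le t = h by case: tt => ->; apply: tp_height.
      by rewrite (hT chD); have := card_pos refl t; case: #|_| => //= n _ ->.
    have := leq_trans (subset_leq_card sC) (card_lift i _); rewrite eh.
    by case: #|C|.
  have sub_of : forall t, (t = tp i \/ t = tp i.+1) ->
      (forall b, inl b \in C -> le b t) ->
      C \subset inr i |: [set (@inl T 'I_(size tops).-1) a | a in downset le t].
    move=> t _ Hb; apply/subsetP => u uC; rewrite !inE.
    case: u uC => [b|j] uC.
      by apply/orP; right; apply/imsetP; exists b; rewrite ?inE ?Hb.
    have := inC _ uC => /= /eqP ->; by rewrite eqxx.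
  case E: [forall b, (inl b \in C) ==> le b (tp i)].
    exists (tp i); split; first by left.
    by apply: sub_of; [left|move=> b; move/forallP: E => /(_ b) /implyP].
  move/negbT: E; rewrite negb_forall => /existsP [a]; rewrite negb_imply => /andP [aC nla].
  have la1 : le a (tp i.+1) by have := inC _ aC; rewrite S_inr_inl (negbTE nla).
  exists (tp i.+1); split; first by right.
  apply: sub_of; first by right.
  move=> b bC; have := inC _ bC; rewrite S_inr_inl => /orP [lb|] //.
  have /orP [lab|lba] := chainP ch aC bC.
    by move: nla; rewrite (tr lab lb).
  exact: tr lba la1.
set C := inr i |: [set (@inl T 'I_(size tops).-1) a | a in downset le (tp i)].
have -> : h.+1 = #|C|.-1.
  rewrite cardsU1 card_imset; last exact: inl_inj.
  have : height le (tp i) = h by apply: tp_height.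
  rewrite (hT chD) => <-; rewrite prednK ?card_pos //.
  by have -> : (inr i \notin [set inl a | a in downset le (tp i)]) by apply/imsetP => -[].
apply: height_lb.
  have Hlift : forall u, u \in C -> (u = inr i) \/ exists2 a, u = inl a & le a (tp i).
    move=> u; rewrite !inE => /orP [/eqP ->|/imsetP [a]]; first by left.
    by rewrite inE => la ->; right; exists a.
  apply/forallP => u; apply/implyP => /Hlift Hu; apply/forallP => v; apply/implyP => /Hlift Hv.
  case: Hu => [->|[a -> la]]; case: Hv => [->|[b -> lb]].
  - by rewrite /= eqxx.
  - by rewrite S_inr_inl lb orbT.
  - by rewrite S_inr_inl la.
  - have := @comp_below _ _ chD _ a b la lb. exact.
apply/subsetP => u; rewrite !inE => /orP [/eqP -> /=|/imsetP [a]]; first by rewrite eqxx.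
by rewrite inE => la ->; rewrite S_inr_inl la.
Qed.

Lemma ord_lt (i : 'I_(size tops).-1) : i < size tops /\ i.+1 < size tops.
Proof. by have := ltn_ord i; split; lia. Qed.

Lemma HS_lt (u v : U) : lt_of S u v -> height S u < height S v.
Proof.
case: u => [x|i]; case: v => [y|j] //=; rewrite /lt_of.
- case/andP => ne lxy; rewrite !HS_inl; apply: (lt_height refl asym tr chD lxy).
  by apply: contra ne => /eqP ->.
- by move=> _; rewrite HS_inl HS_inr ltnS height_leh.
- by case/andP => ne /eqP e; move: ne; rewrite e eqxx.
Qed.

Lemma covS_ll x y : covers S (inl x) (inl y) -> covers le x y.
Proof.
have E : forall a b : T, (inl a != inl b :> U) = (a != b).
  by move=> a b; rewrite (inj_eq inl_inj).
case/andP => /andP [ne /= lxy] /forallP H; apply/andP; split.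
  by rewrite /lt_of lxy andbT -E.
by apply/forallP => z; have := H (inl z); rewrite /lt_of /= !E.
Qed.

Lemma covS_lr x (i : 'I_(size tops).-1) : covers S (inl x) (inr i) -> x = tp i \/ x = tp i.+1.
Proof.
case/andP => /andP [_ lxi] /forallP H; move: lxi; rewrite S_inr_inl => /orP [lx|lx].
  left; apply/eqP/negPn/negP => ne; have := H (inl (tp i)); rewrite /lt_of /= ne lx.
  by rewrite (nthd _ x0 (proj1 (ord_lt i))) refl.
right; apply/eqP/negPn/negP => ne; have := H (inl (tp i.+1)); rewrite /lt_of /= ne lx.
by rewrite (nthd _ x0 (proj2 (ord_lt i))) refl orbT.
Qed.

Lemma covS_r (i : 'I_(size tops).-1) v : ~~ covers S (inr i) v.
Proof. case: v => [y|j]; rewrite /covers /lt_of /= //; by apply/negP => /andP [/andP [ne /eqP e] _]; move: ne; rewrite e eqxx. Qed.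

Lemma HS_cov (u v : U) : covers S u v -> height S v = (height S u).+1.
Proof.
case: u => [x|i]; last by rewrite (negbTE (covS_r _ _)).
case: v => [y|j] c.
  by rewrite !HS_inl; apply: (cov_height refl asym tr chD); apply: covS_ll.
rewrite HS_inl HS_inr; case: (covS_lr c) => ->; rewrite tp_height //; have := ord_lt j; tauto.
Qed.

Definition fS (u : U) : nat := match u with inl x => (ix x).*2 | inr i => (i.*2).+1 end.

Lemma dS_inj (u v : U) : fS u = fS v -> height S u = height S v -> u = v.
Proof.
case: u => [x|i]; case: v => [y|j] /=.
- move=> e; rewrite !HS_inl => eh; congr inl.
  move/double_inj: e => e.
  apply: (same_height refl asym tr chD (ix_le x)); last exact: eh.
  by rewrite e; apply: ix_le.
- by move=> e; have := congr1 odd e; rewrite odd_double /= odd_double.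
- by move=> e; have := congr1 odd e; rewrite odd_double /= odd_double.
- by move=> [] /double_inj e _; congr inr; apply: val_inj.
Qed.

Lemma noncross (u1 v1 u2 v2 : U) : covers S u1 v1 -> covers S u2 v2 ->
  height S u1 = height S u2 -> u1 <> u2 -> v1 <> v2 -> fS u1 < fS u2 -> fS v1 < fS v2.
Proof.
case: u1 => [x1|i]; last by rewrite (negbTE (covS_r _ _)).
case: u2 => [x2|i]; last by move=> _; rewrite (negbTE (covS_r _ _)).
case: v1 => [y1|j1]; case: v2 => [y2|j2] c1 c2 /=; rewrite ?HS_inl.
- move=> eh n12 n'12; rewrite !ltn_double => lt.
  have C1 := covS_ll c1; have C2 := covS_ll c2.
  have l1 : le x1 y1 by case/andP: C1 => /andP [].
  have l2 : le x2 y2 by case/andP: C2 => /andP [].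
  have A : ix x2 <= ix y2.
    rewrite leqNgt; apply/negP => lt2.
    by have := before_find x0 lt2; rewrite (tr l2 (ix_le y2)).
  apply: (leq_trans _ A); rewrite ltnNge; apply/negP => B.
  case: po => _ _ pl.
  have P1 := ix_le x1; have P2 : le x1 (tp (ix y1)) := tr l1 (ix_le y1).
  have := pl x1 (ix x1) (ix x2) (ix y1) (ltnW lt) B (ix_lt y1).
  rewrite !(nthd x1 x0) ?ix_lt // => /(_ P1 P2) P3.
  have ex : x1 = x2 by apply: (same_height refl asym tr chD P3 (ix_le x2) eh).
  by move: lt; rewrite ex ltnn.
- move=> eh; exfalso; move: eh.
  case: (covS_lr c2) => ->; (rewrite tp_height; last by have := ord_lt j2; tauto); move=> eh; have := cov_height refl asym tr chD (covS_ll c1); have := height_leh y1; lia.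
- move=> eh; exfalso; move: eh.
  case: (covS_lr c1) => ->; (rewrite tp_height; last by have := ord_lt j1; tauto); move=> eh; have := cov_height refl asym tr chD (covS_ll c2); have := height_leh y2; lia.
- move=> _ _ nj; rewrite !ltn_double ltnS => lt.
  have nj' : j1 != j2 :> nat by apply/negP => /eqP /val_inj e; apply: nj; rewrite e.
  have [a1 b1] := ord_lt j1; have [a2 b2] := ord_lt j2.
  have E1 : ix x1 = j1 \/ ix x1 = j1.+1 by case: (covS_lr c1) => ->; rewrite ix_tp //; tauto.
  have E2 : ix x2 = j2 \/ ix x2 = j2.+1 by case: (covS_lr c2) => ->; rewrite ix_tp //; tauto.
  move: lt nj'; case: E1 => ->; case: E2 => ->; lia.
Qed.

End Sawed.

Section GeoS.
Local Open Scope ring_scope.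


Lemma seg_y {R : realType} {p q P : R * R} {t : R} :
  P = ((1 - t) * p.1 + t * q.1, (1 - t) * p.2 + t * q.2) ->
  q.2 = p.2 + 1 -> P.2 = p.2 + t.
Proof. by move=> -> /= ->; lra. Qed.

Lemma no_cross {R : realType} {t a1 a2 b1 b2 : R} :
  0 <= t -> t <= 1 -> a1 < a2 -> b1 < b2 -> (1-t)*a1 + t*b1 <> (1-t)*a2 + t*b2.
Proof.
move=> t10 t11 lt lt' E.
have [h|h] := lerP t (1/2).
  have : 0 < (1 - t) * (a2 - a1) by apply: mulr_gt0; lra.
  have : 0 <= t * (b2 - b1) by apply: mulr_ge0; lra.
  lra.
have : 0 <= (1 - t) * (a2 - a1) by apply: mulr_ge0; lra.
have : 0 < t * (b2 - b1) by apply: mulr_gt0; lra.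
lra.
Qed.

Lemma geo (R : realType) (V : finType) (le : rel V) (d : V -> R * R) (n : V -> nat) :
  injective d ->
  (forall v, (d v).2 = (n v)%:R) ->
  (forall x y, covers le x y -> n y = (n x).+1) ->
  (forall x1 y1 x2 y2, covers le x1 y1 -> covers le x2 y2 -> n x1 = n x2 ->
     x1 <> x2 -> y1 <> y2 -> (d x1).1 < (d x2).1 -> (d y1).1 < (d y2).1) ->
  (forall x1 y1 x2 y2, covers le x1 y1 -> covers le x2 y2 ->
         (x1, y1) <> (x2, y2) ->
         forall P, on_segment (d x1) (d y1) P -> on_segment (d x2) (d y2) P ->
           exists v, [&& (v == x1) || (v == y1) & (v == x2) || (v == y2)]
                     /\ P = d v).
Proof.
move=> dinj dn ncov ord.
have band : forall x1 y1 x2 y2 P t1 t2, covers le x1 y1 -> covers le x2 y2 ->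
   (n x1 < n x2)%N -> 0 <= t1 -> t1 <= 1 -> 0 <= t2 -> t2 <= 1 ->
   P = ((1 - t1) * (d x1).1 + t1 * (d y1).1, (1 - t1) * (d x1).2 + t1 * (d y1).2) ->
   P = ((1 - t2) * (d x2).1 + t2 * (d y2).1, (1 - t2) * (d x2).2 + t2 * (d y2).2) ->
   y1 = x2 /\ P = d y1.
  move=> x1 y1 x2 y2 P t1 t2 c1 c2 lt01 t10 t11 t20 t21 E1 E2.
  have h1 : (d y1).2 = (d x1).2 + 1 by rewrite !dn (ncov _ _ c1) -natr1.
  have h2 : (d y2).2 = (d x2).2 + 1 by rewrite !dn (ncov _ _ c2) -natr1.
  have P1 := seg_y E1 h1.
  have P2 : P.2 = (d x2).2 + t2 by rewrite E2 /= h2; lra.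
  have hn : (n x1)%:R + 1 <= (n x2)%:R :> R by rewrite natr1 ler_nat.
  rewrite !dn in P1 P2.
  have et1 : t1 = 1 by lra.
  have et2 : t2 = 0 by lra.
  have ey1 : P = d y1.
    by rewrite E1 et1; case: (d y1) => a b /=; congr (_, _); lra.
  have ex2 : P = d x2.
    by rewrite E2 et2; case: (d x2) => a b /=; congr (_, _); lra.
  split => //; apply: dinj; by rewrite -ey1 -ex2.
move=> x1 y1 x2 y2 c1 c2 neq P [t1 [t10 [t11 E1]]] [t2 [t20 [t21 E2]]].
have h1 : (d y1).2 = (d x1).2 + 1 by rewrite !dn (ncov _ _ c1) -natr1.
have h2 : (d y2).2 = (d x2).2 + 1 by rewrite !dn (ncov _ _ c2) -natr1.
have P1 := seg_y E1 h1.
have P2 := seg_y E2 h2.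
have [lt12|lt21|eqn] := ltngtP (n x1) (n x2).
- have [-> ->] := band x1 y1 x2 y2 P t1 t2 c1 c2 lt12 t10 t11 t20 t21 E1 E2.
  by exists x2; rewrite !eqxx orbT.
- have [-> ->] := band x2 y2 x1 y1 P t2 t1 c2 c1 lt21 t20 t21 t10 t11 E2 E1.
  by exists x1; rewrite !eqxx orbT.
have et : t1 = t2 by move: P1 P2; rewrite !dn eqn; lra.
subst t2.
have E := E1; rewrite E2 in E; case: E => E _.
have d1ne : forall u v, n u = n v -> u <> v -> (d u).1 != (d v).1.
  move=> u v nuv uv; apply/negP => /eqP e; apply: uv; apply: dinj.
  by rewrite [d u]surjective_pairing [d v]surjective_pairing e !dn nuv.
have [ex|nex] := eqVneq x1 x2.
  subst x2.
  have ny : y1 <> y2 by move=> ey; apply: neq; rewrite ey.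
  have nyy : n y1 = n y2 by rewrite (ncov _ _ c1) (ncov _ _ c2).
  have := d1ne _ _ nyy ny; rewrite neq_lt => /orP[] lt.
  - have t0 : t1 = 0 by nra.
    by exists x1; rewrite !eqxx; split => //; rewrite E1 t0; case: (d x1) => a b /=; congr (_, _); ring.
  - have t0 : t1 = 0 by nra.
    by exists x1; rewrite !eqxx; split => //; rewrite E1 t0; case: (d x1) => a b /=; congr (_, _); ring.
have [ey|ney] := eqVneq y1 y2.
  subst y2.
  have := d1ne _ _ eqn (elimN eqP nex) ; rewrite neq_lt => /orP[] lt.
  - have t0 : t1 = 1 by nra.
    by exists y1; rewrite !eqxx !orbT; split => //; rewrite E1 t0; case: (d y1) => a b /=; congr (_, _); ring.
  - have t0 : t1 = 1 by nra.
    by exists y1; rewrite !eqxx !orbT; split => //; rewrite E1 t0; case: (d y1) => a b /=; congr (_, _); ring.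
exfalso.
have nx : x1 <> x2 by apply/eqP.
have ny : y1 <> y2 by apply/eqP.
have := d1ne _ _ eqn nx; rewrite neq_lt => /orP[] lt.
- have lt' := ord _ _ _ _ c1 c2 eqn nx ny lt.
  by apply: (no_cross t10 t11 lt lt'); rewrite E.
- have lt' := ord _ _ _ _ c2 c1 (esym eqn) (nesym nx) (nesym ny) lt.
  by apply: (no_cross t10 t11 lt lt'); rewrite E.
Qed.

End GeoS.

Unset Implicit Arguments.
Local Open Scope ring_scope.


Theorem corollary7p6 (R : realType) (T : finType) (le : rel T) (tops : seq T) :
  finite_tree le ->
  (exists x : T, 0 < height le x)%N ->
  (exists h : nat, forall t : T, is_top le t -> height le t = h) ->
  plane_order le tops ->
  exists d : (T + 'I_(size tops).-1)%type -> R * R,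
    plane_drawing (sawed_le le tops) d /\
    forall x, (d x).2 = ((height (sawed_le le tops) x)%:R : R).
Proof.
case=> [[refl asym tr] [r _] chD] _ [h htop] po.
pose d (u : (T + 'I_(size tops).-1)%type) : R * R :=
  ((@fS T le tops u)%:R, (height (sawed_le le tops) u)%:R).
exists d; split => //.
have dinj : injective d.
  move=> u v [/eqP e1 /eqP e2]; move: e1 e2; rewrite !eqr_nat => /eqP e1 /eqP e2.
  exact: (dS_inj r refl asym tr chD po e1 e2).
split => //.
  by move=> x y lt; rewrite /d /= ltr_nat; apply: (HS_lt r refl asym tr chD htop po lt).
apply: (@geo R _ _ d (height (sawed_le le tops))) => //.
  by move=> x y c; apply: (HS_cov r refl asym tr chD htop po c).
move=> x1 y1 x2 y2 c1 c2 e n1 n2; rewrite /d /= !ltr_nat.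
exact: (noncross r refl asym tr chD htop po c1 c2 e n1 n2).
Qed.
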